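(* Let $H$ be a complex Hilbert space and let $f(z)=\sum_{n=0}^{\infty}a_nz^n$ be a power series with complex coefficients, convergent on the open disk $D(0,R)\subset\mathbb{C}$, $R>0$, and let $f_a(z):=\sum_{n=0}^{\infty}|a_n|z^n$. Let $A,B\in B(H)$ commute and satisfy $\|A\|^2<R$, $\|B\|^2<R$. Then both of the following chains of inequalities hold: \[ r\left[f(AB)\right]\leq \frac12 f_a(\|AB\|)+\frac12 f_a\left(\|A\|^{1/2}\|B\|^{1/2}\|AB\|^{1/2}\right) \leq \frac12 f_a(\|AB\|)+\frac12 f_a^{1/2}(\|A\|\|B\|)f_a^{1/2}(\|AB\|), \] and \[ r\left[f(AB)\right]\leq \frac12 f_a(\|AB\|)+\frac12\min\left\{f_a\left(\|A\|\|B^2\|^{1/2}\right),\ f_a\left(\|A^2\|^{1/2}\|B\|\right)\right\} \] \[ \leq \frac12 f_a(\|AB\|)+\frac12\min\left\{f_a^{1/2}(\|A\|^2)f_a^{1/2}(\|B^2\|),\ f_a^{1/2}(\|A^2\|)f_a^{1/2}(\|B\|^2)\right\}. \]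
   Context: $B(H)$ denotes the algebra of bounded linear operators on $H$, $\|\cdot\|$ the operator norm, and $r(T)$ the spectral radius of $T$. For an operator $T$ with $\|T\|<R$, $f(T):=\sum_{n=0}^\infty a_nT^n$. *)

(* Defs.v *)
From HB Require Import structures.
From mathcomp Require Import all_boot all_order all_algebra.
From mathcomp Require Import all_classical all_reals all_analysis.
From mathcomp Require Import complex.
Export Order.TTheory GRing.Theory Num.Theory.
Export numFieldNormedType.Exports.

Set Implicit Arguments.
Unset Strict Implicit.
Unset Printing Implicit Defensive.

Local Open Scope ring_scope.
Local Open Scope classical_set_scope.

(* The field of complex numbers, seen as a numClosedFieldType (this makes the
   canonical topology / normed structure of numFieldNormedType available). *)
Definition C (R : realType) : numClosedFieldType := R[i].

(* The (real) norm of a vector of a normed space over C = R[i]; the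
   library norm `|x| is valued in R[i] (a nonnegative real complex number),
   we take its real part. *)
Definition rnorm {R : realType} {V : normedModType (C R)} (x : V) : R :=
  complex.Re `|x|.

Definition cmod {R : realType} (z : C R) : R := complex.Re `|z|.

(* (ip) is an inner product on H inducing the norm of H: together with the
   completeness of H, this makes H a complex Hilbert space. *)
Definition is_inner_product {R : realType} {H : completeNormedModType (C R)}
  (ip : H -> H -> C R) : Prop :=
  [/\ (forall x y z, ip (x + y) z = ip x z + ip y z),
      (forall (c : C R) x y, ip (c *: x) y = c * ip x y),
      (forall x y, ip y x = (ip x y)^*) &
      (forall x, ip x x = `|x| ^+ 2)].

Definition bounded_op {R : realType} {H : completeNormedModType (C R)}
  (T : H -> H) : Prop :=
  [/\ (forall x y, T (x + y) = T x + T y),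
      (forall (c : C R) x, T (c *: x) = c *: T x) &
      exists M : R, forall x, rnorm (T x) <= M * rnorm x].

Definition opnorm {R : realType} {H : completeNormedModType (C R)}
  (T : H -> H) : R :=
  sup [set rnorm (T x) | x in [set x : H | rnorm x <= 1]].

Definition spectrum {R : realType} {H : completeNormedModType (C R)}
  (T : H -> H) : set (C R) :=
  [set l | ~ exists S : H -> H,
      [/\ bounded_op S,
          (forall x, S (T x - l *: x) = x) &
          (forall x, T (S x) - l *: S x = x)]].

Definition spec_radius {R : realType} {H : completeNormedModType (C R)}
  (T : H -> H) : R :=
  sup [set cmod l | l in spectrum T].

(* f(T) = sum_n a_n T^n (the series converges in operator norm when
   ||T|| < R; we define the operator through the pointwise limit). *)
Definition op_series {R : realType} {H : completeNormedModType (C R)}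
  (a : nat -> C R) (T : H -> H) : H -> H :=
  fun x => limn (series (fun n => a n *: iter n T x)).

Definition abs_series {R : realType} (a : nat -> C R) (t : R) : R :=
  limn (series (fun n => cmod (a n) * t ^+ n)).

(* Main.v *)
Require Import Defs.
From HB Require Import structures.
From mathcomp Require Import all_boot all_order all_algebra.
From mathcomp Require Import all_classical all_reals all_analysis.
From mathcomp Require Import complex.
From mathcomp Require Import ring lra.
Import Order.TTheory GRing.Theory Num.Theory.
Import numFieldNormedType.Exports.
Local Open Scope ring_scope.
Local Open Scope classical_set_scope.
Local Open Scope complex_scope.
Local Open Scope ring_scope.
Lemma ge0_real (R : realType) (w : C R) : 0 <= w -> w = (complex.Re w)%:C.
Proof. by move=> h; rewrite [LHS]complexE (ger0_Im h) mulr0 addr0. Qed.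

Lemma normC_real (R : realType) (z : C R) : `|z| = (complex.Re `|z|)%:C.
Proof. exact: ge0_real. Qed.

Lemma cmod_ge0 (R : realType) (z : C R) : 0 <= cmod z.
Proof. by rewrite -ler0c /cmod -normC_real. Qed.

Lemma cmodE (R : realType) (z : C R) : `|z| = (cmod z)%:C.
Proof. exact: normC_real. Qed.

Lemma cmodM (R : realType) (z w : C R) : cmod (z * w) = cmod z * cmod w.
Proof.
apply: complexI; rewrite -cmodE normrM !cmodE.
by rewrite -rmorphM.
Qed.

Lemma cmod_real (R : realType) (r : R) : 0 <= r -> cmod (r%:C : C R) = r.
Proof.
move=> r0; apply: complexI; rewrite -cmodE ger0_norm // ler0c //.
Qed.
Lemma cvg_seq_cmod_bound (R : realType) (u : nat -> C R) :
  cvgn (series u) -> exists B : R, forall n, cmod (u n) <= B.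
Proof.
move=> /cvg_series_cvg_0 /cvgP /cvg_seq_bounded [M [Mr hM]].
exists (complex.Re (`|M| + 1)) => n.
have hlt : M < `|M| + 1 by apply: le_lt_trans (real_ler_norm Mr) _; rewrite ltrDl.
have := hM _ hlt n I; rewrite /= => h.
have e : `|M| + 1 = (complex.Re (`|M| + 1))%:C.
  by apply: ge0_real; apply: addr_ge0.
by move: h; rewrite e cmodE lecR.
Qed.

Lemma lim_comb (R : realType) (f g : nat -> R) (al be : R) :
  cvgn (series f) -> cvgn (series g) ->
  series (fun n => al * f n + be * g n) @ \oo -->
    al * limn (series f) + be * limn (series g).
Proof.
move=> cf cg.
have -> : series (fun n => al * f n + be * g n) =
          (fun n => al * series f n + be * series g n).
  apply: funext => n; rewrite /series /= big_split /= !mulr_sumr //.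
apply: cvgD; apply: cvgMr; [exact: cf | exact: cg].
Qed.

Lemma le_sqrt_of_amgm (R : realType) (z A B : R) : 0 <= A -> 0 <= B ->
  (forall l, 0 < l -> z <= (l * A + B / l) / 2) ->
  z <= Num.sqrt A * Num.sqrt B.
Proof.
move=> A0 B0 h.
have [Ap|] := ltP 0 A; last first.
  move=> Ale; have A00 : A = 0 by apply/le_anti; rewrite Ale A0.
  rewrite A00 sqrtr0 mul0r; apply/ler_addgt0Pr => e e0; rewrite add0r.
  have l0 : 0 < (B + 1) / e by rewrite divr_gt0 // ltr_wpDl.
  apply: le_trans (h _ l0) _; rewrite A00 mulr0 add0r.
  have -> : B / ((B + 1) / e) = B * e / (B + 1).
    by field; rewrite ?gt_eqF // ?ltr_wpDl.
  rewrite ler_pdivrMr // ler_pdivrMr ?ltr_wpDl //.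
  nra.
have [Bp|] := ltP 0 B; last first.
  move=> Ble; have B00 : B = 0 by apply/le_anti; rewrite Ble B0.
  rewrite B00 sqrtr0 mulr0; apply/ler_addgt0Pr => e e0; rewrite add0r.
  have l0 : 0 < e / (A + 1) by rewrite divr_gt0 // ltr_wpDl.
  apply: le_trans (h _ l0) _; rewrite B00 mul0r addr0.
  have -> : e / (A + 1) * A = e * A / (A + 1).
    by field; rewrite ?gt_eqF // ?ltr_wpDl.
  rewrite ler_pdivrMr // ler_pdivrMr ?ltr_wpDl //.
  nra.
have sA : 0 < Num.sqrt A by rewrite sqrtr_gt0.
have sB : 0 < Num.sqrt B by rewrite sqrtr_gt0.
have l0 : 0 < Num.sqrt B / Num.sqrt A by rewrite divr_gt0.
apply: le_trans (h _ l0) _.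
rewrite -{2}(sqr_sqrtr A0) -{2}(sqr_sqrtr B0) invf_div.
set a := Num.sqrt A; set b := Num.sqrt B.
have -> : b / a * a ^+ 2 + b ^+ 2 * (a / b) = 2 * (a * b).
  by field; rewrite !gt_eqF.
by rewrite mulrC mulKf // pnatr_eq0.
Qed.
Lemma convex_pow (R : realType) (s t0 th : R) n : 0 <= s -> s <= t0 -> 0 <= th -> th <= 1 ->
  (s + th * (t0 - s)) ^+ n <= (1 - th) * s ^+ n + th * t0 ^+ n.
Proof.
move=> s0 st th0 th1; elim: n => [|n IH]; first by rewrite !expr0; lra.
set x := s + th * (t0 - s).
have x0 : 0 <= x by rewrite /x; nra.
have pq : s ^+ n <= t0 ^+ n by rewrite lerXn2r // nnegrE // (le_trans s0 st).
rewrite exprS; apply: le_trans (ler_wpM2l x0 IH) _; rewrite !exprS.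
set p := s ^+ n; set q := t0 ^+ n.
rewrite -subr_ge0.
have -> : (1 - th) * (s * p) + th * (t0 * q) - x * ((1 - th) * p + th * q) =
  th * (1 - th) * ((t0 - s) * (q - p)) by rewrite /x; ring.
by apply: mulr_ge0; [apply: mulr_ge0; lra | apply: mulr_ge0; rewrite subr_ge0].
Qed.
Section FA.
Context {R : realType} (a : nat -> C R) (rho : R)
  (a_cvg : forall z : C R, cmod z < rho -> cvgn (series (fun n => a n * z ^+ n))).


Lemma fa_cvg {t} : 0 <= t -> t < rho -> cvgn (series (fun n => cmod (a n) * t ^+ n)).
Proof.
move=> t0 trho; set t' := (t + rho) / 2.
have t't : t < t' by rewrite /t'; lra.
have t'r : t' < rho by rewrite /t'; lra.
have t'0 : 0 < t' by lra.
have ct : cmod (t'%:C : C R) < rho by rewrite cmod_real //; exact: ltW.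
have [B hB] := cvg_seq_cmod_bound _ _ (a_cvg _ ct).
have hB' : forall n, cmod (a n) * t' ^+ n <= B.
  move=> n; move: (hB n); rewrite cmodM.
  have -> : cmod (t'%:C ^+ n : C R) = t' ^+ n.
    by rewrite -rmorphXn /= cmod_real // exprn_ge0 // ltW.
  done.
have q0 : 0 <= t / t' by rewrite divr_ge0 // ltW.
have q1 : t / t' < 1 by rewrite ltr_pdivrMr // mul1r.
apply: (@series_le_cvg _ _ (geometric B (t / t'))).
- by move=> n; rewrite mulr_ge0 ?cmod_ge0 ?exprn_ge0.
- move=> n; rewrite /geometric /=; apply: mulr_ge0; last exact: exprn_ge0.
  apply: le_trans (hB' 0%N); by rewrite mulr_ge0 ?cmod_ge0 ?exprn_ge0 // ltW.
- move=> n; rewrite /geometric /= expr_div_n mulrA.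
  rewrite ler_pdivlMr ?exprn_gt0 //.
  rewrite mulrAC; apply: ler_wpM2r; first by rewrite exprn_ge0.
  exact: hB'.
- apply: is_cvg_geometric_series; rewrite ger0_norm //.
Qed.

Lemma fa_ge0 {t} : 0 <= t -> t < rho -> 0 <= abs_series a t.
Proof.
move=> t0 tr; have c := fa_cvg t0 tr.
have := nondecreasing_cvgn_le _ c 0%N.
rewrite /series /= big_geq //; apply.
apply: nondecreasing_series => k _ _; rewrite mulr_ge0 ?cmod_ge0 ?exprn_ge0 //.
Qed.

Lemma fa_mono {s t} : 0 <= s -> s <= t -> t < rho -> abs_series a s <= abs_series a t.
Proof.
move=> s0 st tr; have t0 := le_trans s0 st.
apply: lim_series_le; [exact: fa_cvg (le_lt_trans st tr) | exact: fa_cvg|].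
move=> n; apply: ler_wpM2l; first exact: cmod_ge0.
by rewrite lerXn2r // nnegrE.
Qed.

Lemma fa_convex {s t0 th} : 0 <= s -> s <= t0 -> t0 < rho -> 0 <= th -> th <= 1 ->
  abs_series a (s + th * (t0 - s)) <=
  (1 - th) * abs_series a s + th * abs_series a t0.
Proof.
move=> s0 st tr th0 th1.
have t0' : 0 <= s + th * (t0 - s) by nra.
have tt : s + th * (t0 - s) < rho by nra.
have h := lim_comb _ _ _ (1 - th) th (fa_cvg s0 (le_lt_trans st tr)) (fa_cvg (le_trans s0 st) tr).
rewrite -(cvg_lim _ h) //.
apply: lim_series_le; [exact: fa_cvg | by apply/cvg_ex; eexists; exact: h|].
move=> n; rewrite mulrCA (mulrCA th) -mulrDr.
apply: ler_wpM2l; first exact: cmod_ge0.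
exact: convex_pow.
Qed.

Lemma fa_rcont {s e} : 0 <= s -> s < rho -> 0 < e ->
  exists t, [/\ s < t, t < rho & abs_series a t < abs_series a s + e].
Proof.
move=> s0 sr e0; set t0 := (s + rho) / 2.
have st0 : s < t0 by rewrite /t0; lra.
have t0r : t0 < rho by rewrite /t0; lra.
set D := abs_series a t0 - abs_series a s.
have D0 : 0 <= D by rewrite /D subr_ge0; apply: fa_mono => //; exact: ltW.
set th := e / (e + D).
have eD : 0 < e + D by lra.
have th0 : 0 < th by rewrite /th divr_gt0.
have th1 : th <= 1 by rewrite /th ler_pdivrMr // mul1r; lra.
have thD : th * D < e.
  by rewrite /th mulrAC ltr_pdivrMr // ltr_pM2l //; lra.
exists (s + th * (t0 - s)); split.
- by rewrite ltrDl; apply: mulr_gt0 => //; lra.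
- by nra.
- apply: le_lt_trans (fa_convex s0 (ltW st0) t0r (ltW th0) th1) _.
  by rewrite /D in thD; lra.
Qed.

Lemma fa_cs {u v} : 0 <= u -> 0 <= v -> u ^+ 2 < rho -> v ^+ 2 < rho ->
  abs_series a (u * v) <=
  Num.sqrt (abs_series a (u ^+ 2)) * Num.sqrt (abs_series a (v ^+ 2)).
Proof.
move=> u0 v0 ur vr.
have u20 : 0 <= u ^+ 2 by exact: sqr_ge0.
have v20 : 0 <= v ^+ 2 by exact: sqr_ge0.
have uv0 : 0 <= u * v by exact: mulr_ge0.
have uvr : u * v < rho by nra.
apply: le_sqrt_of_amgm; [exact: fa_ge0|exact: fa_ge0|].
move=> l l0.
have h := lim_comb _ _ _ (l / 2) (2 * l)^-1 (fa_cvg u20 ur) (fa_cvg v20 vr).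
have -> : (l * abs_series a (u ^+ 2) + abs_series a (v ^+ 2) / l) / 2 =
   l / 2 * abs_series a (u ^+ 2) + (2 * l)^-1 * abs_series a (v ^+ 2).
  by field; rewrite gt_eqF.
rewrite -(cvg_lim _ h) //.
apply: lim_series_le; [exact: fa_cvg | by apply/cvg_ex; eexists; exact: h|].
move=> n; rewrite mulrCA (mulrCA (2 * l)^-1) -mulrDr.
apply: ler_wpM2l; first exact: cmod_ge0.
rewrite exprMn -!exprM mulnC !exprM.
set p := u ^+ n; set q := v ^+ n.
rewrite -subr_ge0.
have -> : l / 2 * p ^+ 2 + (2 * l)^-1 * q ^+ 2 - p * q = (l * p - q) ^+ 2 / (2 * l).
  by field; rewrite gt_eqF.
by apply: divr_ge0; [exact: sqr_ge0 | lra].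
Qed.
End FA.
Section Rn.
Context {R : realType} {H : completeNormedModType (C R)}.
Implicit Types (x y : H).

Lemma rnormE x : `|x| = (rnorm x)%:C.
Proof. by rewrite /rnorm; apply: ge0_real. Qed.

Lemma rnorm_ge0 x : 0 <= rnorm x.
Proof. by rewrite -ler0c -rnormE. Qed.

Lemma rnormD x y : rnorm (x + y) <= rnorm x + rnorm y.
Proof. by rewrite -lecR rmorphD /= -!rnormE ler_normD. Qed.

Lemma rnormZ (c : C R) x : rnorm (c *: x) = cmod c * rnorm x.
Proof. by apply: complexI; rewrite -rnormE normrZ rmorphM /= -cmodE -rnormE. Qed.

Lemma rnormN x : rnorm (- x) = rnorm x.
Proof. by rewrite /rnorm normrN. Qed.

Lemma rnorm0 : rnorm (0 : H) = 0.
Proof. by rewrite /rnorm normr0. Qed.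

Lemma rnorm_eq0 x : rnorm x = 0 -> x = 0.
Proof. by move=> h; apply/normr0_eq0; rewrite rnormE h. Qed.

Lemma rnormB x y : rnorm (x - y) = rnorm (y - x).
Proof. by rewrite -rnormN opprB. Qed.

Lemma rnorm_sum (I : Type) (s : seq I) (P : pred I) (F : I -> H) :
  rnorm (\sum_(i <- s | P i) F i) <= \sum_(i <- s | P i) rnorm (F i).
Proof.
elim/big_rec2: _ => [|i y1 y2 _ h]; first by rewrite rnorm0.
by apply: le_trans (rnormD _ _) _; rewrite lerD2l.
Qed.
End Rn.
Section Lim.
Context {R : realType} {H : completeNormedModType (C R)}.

Lemma lim_rnorm_le (s : nat -> H) (l : H) (L : R) :
  s @ \oo --> l -> (\forall n \near \oo, rnorm (s n) <= L) -> rnorm l <= L.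
Proof.
move=> /cvgrPdist_lt sl hL; apply/ler_addgt0Pr => e e0.
have e0' : (0 : C R) < e%:C by rewrite ltcR.
have := sl _ e0'; move=> h.
have [n [hn1 hn2]] : exists n, `|l - s n| < e%:C /\ rnorm (s n) <= L.
  by have [n hn] := filter_ex (filterI h hL); exists n.
rewrite rnormE ltcR in hn1.
have := rnormD (l - s n) (s n); rewrite subrK => h1.
apply: (le_trans h1); rewrite addrC; apply: lerD => //; exact: ltW.
Qed.
End Lim.
Section Abs.
Context {R : realType} {H : completeNormedModType (C R)}.

Lemma abs_cvg (u : nat -> H) (b : nat -> R) :
  (forall n, rnorm (u n) <= b n) -> cvgn (series b) ->
  cvgn (series u) /\ rnorm (limn (series u)) <= limn (series b).
Proof.
move=> ub hb.
have b0 : forall n, 0 <= b n by move=> n; apply: le_trans (ub n); exact: rnorm_ge0.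
have cu : cvgn (series u).
  apply/cauchy_cvgP/cauchy_seriesP => e e0.
  have e0' : 0 < complex.Re e by move: e0; rewrite ltcE => /andP[].
  have hb2 : cauchy (series b @ \oo) by apply/cauchy_cvgP.
  have := (cauchy_seriesP b).1 hb2 _ e0'.
  apply: filterS => n /= hn.
  have ee : e = (complex.Re e)%:C by apply: ge0_real; exact: ltW.
  rewrite ee rnormE ltcR.
  idtac.
  apply: le_lt_trans (rnorm_sum _ _ _ _) _.
  apply: le_lt_trans _ hn.
  apply: le_trans (real_ler_norm _); last by apply: num_real.
  by apply: ler_sum => i _.
split => //.
apply: lim_rnorm_le; first exact: cu.
near=> n.
apply: le_trans (rnorm_sum _ _ _ _) _.
apply: le_trans (ler_sum _ (fun i _ => ub i)) _.
apply: nondecreasing_cvgn_le => //.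
by apply: nondecreasing_series => k _ _; exact: b0.
Unshelve. all: by end_near.
Qed.
End Abs.
Section Bop.
Context {R : realType} {H : completeNormedModType (C R)}.
Implicit Types (T S : H -> H).

Lemma bop0 {T : H -> H} : bounded_op T -> T 0 = 0.
Proof.
case=> hD _ _; have := hD 0 0; rewrite addr0 => h.
by apply: (addrI (T 0)); rewrite addr0 -h.
Qed.

Lemma bopN {T : H -> H} x : bounded_op T -> T (- x) = - T x.
Proof.
move=> hT; have := bop0 hT; case: hT => hD _ _ h0.
by apply/eqP; rewrite -subr_eq0 opprK -hD addNr h0.
Qed.

Lemma bopB {T : H -> H} x y : bounded_op T -> T (x - y) = T x - T y.
Proof. by move=> hT; have hN := bopN y hT; case: hT => hD _ _; rewrite hD hN. Qed.

Lemma bop_sum {T : H -> H} (I : Type) (s : seq I) (P : pred I) (F : I -> H) :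
  bounded_op T -> T (\sum_(i <- s | P i) F i) = \sum_(i <- s | P i) T (F i).
Proof.
move=> hT; elim/big_rec2: _ => [|i y1 y2 _ h]; first exact: bop0.
by case: hT => hD _ _; rewrite hD h.
Qed.

Lemma bop_bound {T : H -> H} : bounded_op T ->
  exists M, 0 <= M /\ forall x, rnorm (T x) <= M * rnorm x.
Proof.
case=> _ _ [M hM]; exists `|M|; split => // x.
apply: le_trans (hM x) _; apply: ler_wpM2r; first exact: rnorm_ge0.
exact: ler_norm.
Qed.

Lemma bop_comp {T S : H -> H} : bounded_op T -> bounded_op S -> bounded_op (T \o S).
Proof.
move=> hT hS; have [M [M0 hM]] := bop_bound hT; have [N [N0 hN]] := bop_bound hS.
case: hT => tD tZ _; case: hS => sD sZ _.
split => [x y|c x|] /=; first by rewrite sD tD.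
  by rewrite sZ tZ.
exists (M * N) => x; apply: le_trans (hM _) _; rewrite -mulrA.
by apply: ler_wpM2l.
Qed.

Lemma bop_iter {T : H -> H} n : bounded_op T -> bounded_op (iter n T).
Proof.
move=> hT; elim: n => [|n IH].
  by split => //=; exists 1 => x; rewrite mul1r.
have -> : iter n.+1 T = T \o iter n T by apply: funext => x; rewrite iterS.
exact: bop_comp.
Qed.

Lemma bop_cvg {T : H -> H} {s : nat -> H} {l : H} : bounded_op T ->
  s @ \oo --> l -> (fun n => T (s n)) @ \oo --> T l.
Proof.
move=> hT; have [M [M0 hM]] := bop_bound hT.
move=> /cvgrPdist_lt sl; apply/cvgrPdist_lt => e e0.
have e0' : 0 < complex.Re e by move: e0; rewrite ltcE => /andP[].
have ee : e = (complex.Re e)%:C by apply: ge0_real; exact: ltW.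
have d0 : (0 : R) < complex.Re e / (M + 1) by rewrite divr_gt0 // ltr_wpDl.
have := sl ((complex.Re e / (M + 1))%:C); rewrite ltcR => /(_ d0).
apply: filterS => n; rewrite !rnormE !ltcR ee ltcR -bopB // => h.
apply: le_lt_trans (hM _) _.
have h1 : M * rnorm (l - s n) <= (M + 1) * rnorm (l - s n).
  by apply: ler_wpM2r; [exact: rnorm_ge0| rewrite lerDl].
apply: le_lt_trans h1 _.
by rewrite mulrC -ltr_pdivlMr // ltr_wpDl.
Qed.

Lemma bop_lim {T : H -> H} (s : nat -> H) : bounded_op T -> cvgn s ->
  cvgn (fun n => T (s n)) /\ T (limn s) = limn (fun n => T (s n)).
Proof.
move=> hT cs; have h := bop_cvg hT cs.
split; first by apply/cvg_ex; eexists; exact: h.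
by apply/esym/cvg_lim.
Qed.

Lemma bop_series {T : H -> H} (u : nat -> H) n : bounded_op T ->
  T (series u n) = series (fun k => T (u k)) n.
Proof. by move=> hT; rewrite /series /= bop_sum. Qed.
End Bop.
Section Opnorm.
Context {R : realType} {H : completeNormedModType (C R)}.

Lemma opnorm_has_sup {T : H -> H} : bounded_op T ->
  has_sup [set rnorm (T x) | x in [set x : H | rnorm x <= 1]].
Proof.
move=> hT; have [M [M0 hM]] := bop_bound hT.
split; first by exists (rnorm (T 0)), 0 => //=; rewrite rnorm0 ler01.
exists M => _ [x /= hx <-]; apply: le_trans (hM x) _.
by rewrite -{2}(mulr1 M) ler_wpM2l.
Qed.

Lemma opnormP {T : H -> H} x : bounded_op T -> rnorm (T x) <= opnorm T * rnorm x.
Proof.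
move=> hT; have hs := opnorm_has_sup hT.
have [->|xn0] := eqVneq x 0.
  by rewrite (bop0 hT) rnorm0 mulr0.
have r0 : 0 < rnorm x.
  rewrite lt_neqAle rnorm_ge0 andbT eq_sym; apply/negP => /eqP h.
  by move/eqP: xn0; apply; exact: rnorm_eq0.
have hy : rnorm ((rnorm x)^-1%:C *: x) <= 1.
  rewrite rnormZ cmod_real ?invr_ge0 ?rnorm_ge0 // mulVf // gt_eqF //.
have := sup_upper_bound hs (ex_intro2 _ _ ((rnorm x)^-1%:C *: x) hy erefl).
case: hT => _ hZ _; rewrite hZ rnormZ cmod_real ?invr_ge0 ?rnorm_ge0 //.
by move=> h; have := ler_wpM2r (ltW r0) h; rewrite mulrAC mulVf ?gt_eqF // mul1r.
Qed.

Lemma opnorm_ge0 {T : H -> H} : bounded_op T -> 0 <= opnorm T.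
Proof.
move=> hT; have hs := opnorm_has_sup hT.
have h0 : rnorm (0 : H) <= 1 by rewrite rnorm0 ler01.
have := sup_upper_bound hs (ex_intro2 _ _ (0:H) h0 erefl).
by rewrite (bop0 hT) rnorm0.
Qed.

Lemma opnorm_le {T : H -> H} (M : R) : bounded_op T -> 0 <= M ->
  (forall x, rnorm (T x) <= M * rnorm x) -> opnorm T <= M.
Proof.
move=> hT M0 hM; apply: ge_sup; first by exists (rnorm (T 0)), 0 => //=; rewrite rnorm0 ler01.
move=> _ [x /= hx <-]; apply: le_trans (hM x) _.
by rewrite -{2}(mulr1 M) ler_wpM2l.
Qed.

Lemma iter_opnorm {T : H -> H} (M : R) n x : bounded_op T -> 0 <= M ->
  (forall y, rnorm (T y) <= M * rnorm y) -> rnorm (iter n T x) <= M ^+ n * rnorm x.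
Proof.
move=> hT M0 hM; elim: n => [|n IH]; first by rewrite expr0 mul1r.
rewrite iterS exprS -mulrA; apply: le_trans (hM _) _; exact: ler_wpM2l.
Qed.
End Opnorm.
Section Neumann.
Context {R : realType} {H : completeNormedModType (C R)}.

Lemma cmodV (z : C R) : cmod (z^-1) = (cmod z)^-1.
Proof. by apply: complexI; rewrite -cmodE normfV cmodE fmorphV. Qed.

Lemma cmodX (z : C R) n : cmod (z ^+ n) = (cmod z) ^+ n.
Proof.
elim: n => [|n IH]; last by rewrite !exprS cmodM IH.
by rewrite !expr0 cmod_real.
Qed.

Lemma small_to0 (u : nat -> H) (C0 q : R) : 0 <= C0 -> 0 <= q -> q < 1 ->
  (forall n, rnorm (u n) <= C0 * q ^+ n) -> u @ \oo --> 0.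
Proof.
move=> C00 q0 q1 hu; apply/cvgrPdist_lt => e e0.
have e0' : 0 < complex.Re e by move: e0; rewrite ltcE => /andP[].
have ee : e = (complex.Re e)%:C by apply: ge0_real; exact: ltW.
have hg : geometric C0 q @ \oo --> (0 : R) by apply: cvg_geometric; rewrite ger0_norm.
move/cvgrPdist_lt: hg => /(_ _ e0').
apply: filterS => n; rewrite sub0r normrN /geometric /= => h.
rewrite sub0r normrN rnormE ee ltcR; apply: le_lt_trans (hu n) _.
apply: le_lt_trans (ler_norm _) h.
Qed.

Lemma neumann (V : H -> H) (c M : R) (lam : C R) : bounded_op V -> 0 <= c -> 0 <= M ->
  (forall k x, rnorm (iter k V x) <= c * M ^+ k * rnorm x) -> M < cmod lam ->
  ~ spectrum V lam.
Proof.
move=> hV c0 M0 hk Ml; rewrite /spectrum /=; apply.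
set L := cmod lam.
have L0 : 0 < L by apply: le_lt_trans Ml.
have lam0 : lam != 0.
  by apply/eqP => h; move: L0; rewrite /L h /cmod normr0 /= ltxx.
set q := M / L.
have q0 : 0 <= q by rewrite divr_ge0 // ltW.
have q1 : q < 1 by rewrite /q ltr_pdivrMr // mul1r.
have hiter k : bounded_op (iter k V) by exact: bop_iter.
pose u (x : H) := fun k => lam ^- k.+1 *: iter k V x.
pose w (x : H) := series (u x).
have ub (x : H) k : rnorm (u x k) <= geometric (c * rnorm x / L) q k.
  rewrite /u rnormZ cmodV cmodX -/L /geometric /= /q expr_div_n.
  rewrite exprS invfM.
  have -> : c * rnorm x / L * (M ^+ k / L ^+ k) = L^-1 * (L ^+ k)^-1 * (c * M ^+ k * rnorm x).
    by rewrite mulrC; field; rewrite -/L expf_neq0 ?gt_eqF.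
  apply: ler_wpM2l; last exact: hk.
  by rewrite mulr_ge0 // invr_ge0 ?exprn_ge0 // ltW.
have gcvg (x : H) : cvgn (series (geometric (c * rnorm x / L) q)).
  by apply: is_cvg_geometric_series; rewrite ger0_norm.
have wc (x : H) : cvgn (w x) by have [] := abs_cvg (u x) _ (ub x) (gcvg x).
have tel (x : H) n : V (w x n) - lam *: w x n = lam ^- n *: iter n V x - x.
  elim: n => [|n IH].
    by rewrite /w /series /= big_geq // (bop0 hV) scaler0 subrr expr0 invr1 scale1r subrr.
  rewrite /w /series /= big_nat_recr //= -/(series (u x) n) -/(w x n).
  case: (hV) => hD hZ _; rewrite hD hZ scalerDr opprD addrACA IH.
  rewrite /u scalerA -iterS.
  have -> : lam / lam ^+ n.+1 = lam ^- n by rewrite exprS invfM mulrA mulfV // mul1r.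
  by rewrite addrCA (addrAC (lam ^- n *: _)) subrr add0r.
have tel2 (x : H) n : w (V x - lam *: x) n = V (w x n) - lam *: w x n.
  elim: n => [|n IH].
    by rewrite /w /series /= !big_geq // (bop0 hV) scaler0 subrr.
  rewrite /w /series /= in IH; rewrite /w /series /= !big_nat_recr //= IH.
  case: (hV) => hD hZ _; rewrite hD hZ scalerDr opprD addrACA.
  congr (_ + _); rewrite /u.
  have hN' := bopN (- (lam *: x)) (hiter n).
  case: (hiter n) => hD' hZ' _; rewrite hD' (bopN _ (hiter n)) hZ' -iterSr iterS.
  by rewrite scalerDr scalerN !scalerA mulrC.
have tcvg (x : H) : (fun n => V (w x n) - lam *: w x n) @ \oo --> (0 - x).
  under eq_fun do rewrite tel.
  apply: cvgB; last exact: cvg_cst.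
  apply: (@small_to0 _ (c * rnorm x) q) => //; first by rewrite mulr_ge0 // rnorm_ge0.
  move=> n; rewrite rnormZ cmodV cmodX -/L.
  apply: le_trans (ler_wpM2l _ (hk n x)) _.
    by rewrite invr_ge0; apply: exprn_ge0; exact: ltW.
  rewrite le_eqVlt; apply/orP; left; apply/eqP; rewrite /q expr_div_n.
  by field; rewrite ?expf_neq0 // gt_eqF.
have tlim (x : H) : V (limn (w x)) - lam *: limn (w x) = - x.
  have h1 : (fun n => V (w x n) - lam *: w x n) @ \oo --> V (limn (w x)) - lam *: limn (w x).
    apply: cvgB; first exact: bop_cvg hV (wc x).
    exact: cvgZr (wc x).
  by rewrite -(cvg_lim _ h1) // (cvg_lim _ (tcvg x)) // sub0r.
exists (fun x => - limn (w x)); split.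
- split.
  + move=> x y.
    have -> : w (x + y) = (fun n => w x n + w y n).
      apply: funext => n; rewrite /w /series /= -big_split; apply: eq_bigr => k _.
      by rewrite /u; case: (hiter k) => hD' _ _; rewrite hD' scalerDr.
    by rewrite (cvg_lim _ (cvgD (wc x) (wc y))) // opprD.
  + move=> z x.
    have -> : w (z *: x) = (fun n => z *: w x n).
      apply: funext => n; rewrite /w /series /= scaler_sumr; apply: eq_bigr => k _.
      by rewrite /u; case: (hiter k) => _ hZ' _; rewrite hZ' !scalerA mulrC.
    by rewrite (cvg_lim _ (cvgZr (wc x))) // scalerN.
  + exists (c / L * (1 - q)^-1) => x; rewrite rnormN.
    have [_ hb] := abs_cvg (u x) _ (ub x) (gcvg x).
    apply: le_trans hb _.
    have hg : series (geometric (c * rnorm x / L) q) @ \oo --> (c * rnorm x / L * (1 - q)^-1).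
      by apply: cvg_geometric_series; rewrite ger0_norm.
    rewrite (cvg_lim _ hg) // le_eqVlt; apply/orP; left; apply/eqP.
    by rewrite -!mulrA; congr (_ * _); rewrite mulrC -mulrA; congr (_ * _).
- move=> x; have -> : w (V x - lam *: x) = (fun n => V (w x n) - lam *: w x n).
    by apply: funext => n; rewrite tel2.
  by rewrite (cvg_lim _ (tcvg x)) // sub0r opprK.
- move=> x; rewrite (bopN _ hV) scalerN opprK addrC -opprB tlim.
  by rewrite opprK.
Qed.
End Neumann.
Lemma lim_q_le {R : realType} {H : completeNormedModType (C R)} (q : H -> R) (K : R)
  (s : nat -> H) (l : H) (L : R) : 0 <= K ->
  (forall y z, q y <= q z + K * rnorm (y - z)) ->
  s @ \oo --> l -> (\forall n \near \oo, q (s n) <= L) -> q l <= L.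
Proof.
move=> K0 hq /cvgrPdist_lt sl hL; apply/ler_addgt0Pr => e e0.
have d0 : 0 < e / (K + 1) by rewrite divr_gt0 // ltr_wpDl.
have d0' : (0 : C R) < (e / (K + 1))%:C by rewrite ltcR.
have h := sl _ d0'.
have [n [hn1 hn2]] : exists n, `|l - s n| < (e / (K + 1))%:C /\ q (s n) <= L.
  by have [n hn] := filter_ex (filterI h hL); exists n.
rewrite rnormE ltcR in hn1.
apply: le_trans (hq l (s n)) _; apply: lerD => //.
have h1 : K * rnorm (l - s n) <= (K + 1) * rnorm (l - s n).
  by apply: ler_wpM2r; [exact: rnorm_ge0| rewrite lerDl].
apply: le_trans h1 _; rewrite mulrC -ler_pdivlMr ?ltr_wpDl //; exact: ltW.
Qed.

Lemma cvg_seriesMl {R : realType} (f : nat -> R) (k : R) :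
  cvgn (series f) -> cvgn (series (fun n => k * f n)).
Proof. by move=> h; have := is_cvg_seriesZ (k := k) h. Qed.

Section Key.
Context {R : realType} {H : completeNormedModType (C R)} (a : nat -> C R) (rho : R)
  (a_cvg : forall z : C R, cmod z < rho -> cvgn (series (fun n => a n * z ^+ n))).

Lemma key (P : H -> H) (s : R) : bounded_op P -> 0 <= s -> s < rho ->
  (forall t, s < t -> t < rho ->
     exists c, 0 <= c /\ forall j x, rnorm (iter j P x) <= c * t ^+ j * rnorm x) ->
  spec_radius (op_series a P) <= abs_series a s.
Proof.
move=> hP s0 sr hyp.
set T := op_series a P.
have fs0 : 0 <= abs_series a s by exact: (fa_ge0 _ _ a_cvg).
have bnd : forall lam, spectrum T lam -> cmod lam <= abs_series a s.
  move=> lam hl; rewrite leNgt; apply/negP => hlt.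
  have e0 : 0 < cmod lam - abs_series a s by rewrite subr_gt0.
  have [t [st tr ft]] := fa_rcont _ _ a_cvg s0 sr e0.
  rewrite addrC subrK in ft.
  have [c [c0 hc]] := hyp t st tr.
  have t0 : 0 < t by apply: le_lt_trans st.
  have tge0 : 0 <= t by exact: ltW.
  have hiter k : bounded_op (iter k P) by exact: bop_iter.
  pose Nw (x : H) := sup [set rnorm (iter j P x) / t ^+ j | j in [set: nat]].
  have Nhs (x : H) : has_sup [set rnorm (iter j P x) / t ^+ j | j in [set: nat]].
    split; first by exists (rnorm (iter 0 P x) / t ^+ 0), 0%N.
    exists (c * rnorm x) => _ [j _ <-].
    by rewrite ler_pdivrMr ?exprn_gt0 // mulrAC; apply: le_trans (hc j x) _; rewrite mulrAC.
  have Nub (x : H) j : rnorm (iter j P x) / t ^+ j <= Nw x.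
    exact: sup_upper_bound (Nhs x) _ (ex_intro2 _ _ j I erefl).
  have Nle (x : H) : Nw x <= c * rnorm x.
    apply: ge_sup; first by exists (rnorm (iter 0 P x) / t ^+ 0), 0%N.
    move=> _ [j _ <-].
    by rewrite ler_pdivrMr ?exprn_gt0 // mulrAC; apply: le_trans (hc j x) _; rewrite mulrAC.
  have Nge (x : H) : rnorm x <= Nw x.
    by have := Nub x 0%N; rewrite expr0 divr1.
  have N0 (x : H) : 0 <= Nw x by apply: le_trans (Nge x); exact: rnorm_ge0.
  have ND (x y : H) : Nw (x + y) <= Nw x + Nw y.
    apply: ge_sup; first by exists (rnorm (iter 0 P (x + y)) / t ^+ 0), 0%N.
    move=> _ [j _ <-]; case: (hiter j) => hD _ _; rewrite hD.
    apply: (@le_trans _ _ ((rnorm (iter j P x) + rnorm (iter j P y)) / t ^+ j)).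
      by rewrite ler_pM2r ?invr_gt0 ?exprn_gt0 //; exact: rnormD.
    by rewrite mulrDl; apply: lerD; exact: Nub.
  have NZ (z : C R) (x : H) : Nw (z *: x) <= cmod z * Nw x.
    apply: ge_sup; first by exists (rnorm (iter 0 P (z *: x)) / t ^+ 0), 0%N.
    move=> _ [j _ <-]; case: (hiter j) => _ hZ _; rewrite hZ rnormZ -mulrA.
    by apply: ler_wpM2l; [exact: cmod_ge0| exact: Nub].
  have NP (x : H) k : Nw (iter k P x) <= t ^+ k * Nw x.
    apply: ge_sup; first by exists (rnorm (iter 0 P (iter k P x)) / t ^+ 0), 0%N.
    move=> _ [j _ <-]; rewrite -iterD.
    have := Nub x (j + k)%N; rewrite exprD => h.
    rewrite -ler_pdivrMl ?exprn_gt0 //; apply: le_trans h.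
    rewrite le_eqVlt; apply/orP; left; apply/eqP.
    by rewrite invfM mulrC -mulrA.
  have NB (y z : H) : Nw y <= Nw z + c * rnorm (y - z).
    rewrite {1}(_ : y = z + (y - z)); last by rewrite addrC subrK.
    by apply: le_trans (ND _ _) _; rewrite lerD2l.
  have Nsum (n : nat) (F : nat -> H) : Nw (\sum_(0 <= k < n) F k) <= \sum_(0 <= k < n) Nw (F k).
    elim/big_rec2: _ => [|k y1 y2 _ h]; first by apply: le_trans (Nle 0) _; rewrite rnorm0 mulr0.
    by apply: le_trans (ND _ _) _; rewrite lerD2l.
  have fc := fa_cvg _ _ a_cvg tge0 tr.
  have ub (x : H) n : rnorm (a n *: iter n P x) <= c * rnorm x * (cmod (a n) * t ^+ n).
    rewrite rnormZ; apply: le_trans (ler_wpM2l (cmod_ge0 _ _) (hc n x)) _.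
    by rewrite le_eqVlt; apply/orP; left; apply/eqP; ring.
  have Tc (x : H) : cvgn (series (fun n => a n *: iter n P x)).
    by have [] := abs_cvg _ _ (ub x) (cvg_seriesMl _ (c * rnorm x) fc).
  have NT (x : H) : Nw (T x) <= abs_series a t * Nw x.
    apply: (lim_q_le _ _ _ _ _ c0 NB (Tc x)); near=> n.
    apply: le_trans (Nsum _ _) _.
    apply: (@le_trans _ _ (\sum_(0 <= k < n) (cmod (a k) * t ^+ k) * Nw x)).
      apply: ler_sum => k _; apply: le_trans (NZ _ _) _; rewrite -mulrA.
      by apply: ler_wpM2l; [exact: cmod_ge0|exact: NP].
    rewrite -mulr_suml; apply: ler_wpM2r => //.
    apply: nondecreasing_cvgn_le => //.
    by apply: nondecreasing_series => k _ _; rewrite mulr_ge0 ?cmod_ge0 ?exprn_ge0.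
  have hT : bounded_op T.
    split.
    - move=> x y; rewrite /T /op_series.
      have -> : series (fun n => a n *: iter n P (x + y)) =
         (fun m => series (fun n => a n *: iter n P x) m + series (fun n => a n *: iter n P y) m).
        apply: funext => m; rewrite /series /= -big_split; apply: eq_bigr => k _.
        by case: (hiter k) => hD _ _; rewrite hD scalerDr.
      by rewrite (cvg_lim _ (cvgD (Tc x) (Tc y))).
    - move=> z x; rewrite /T /op_series.
      have -> : series (fun n => a n *: iter n P (z *: x)) =
         (fun m => z *: series (fun n => a n *: iter n P x) m).
        apply: funext => m; rewrite /series /= scaler_sumr; apply: eq_bigr => k _.
        by case: (hiter k) => _ hZ _; rewrite hZ !scalerA mulrC.
      by rewrite (cvg_lim _ (cvgZr (Tc x))).
    - exists (abs_series a t * c) => x.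
      apply: le_trans (Nge _) _; apply: le_trans (NT x) _; rewrite -mulrA.
      by apply: ler_wpM2l; [exact: (fa_ge0 _ _ a_cvg)|exact: Nle].
  have hk k (x : H) : rnorm (iter k T x) <= c * abs_series a t ^+ k * rnorm x.
    apply: le_trans (Nge _) _.
    have : Nw (iter k T x) <= abs_series a t ^+ k * Nw x.
      elim: k => [|k IH]; first by rewrite expr0 mul1r.
      rewrite iterS exprS -mulrA; apply: le_trans (NT _) _.
      by apply: ler_wpM2l => //; exact: (fa_ge0 _ _ a_cvg).
    move=> h; apply: le_trans h _; rewrite (mulrC c) -mulrA; apply: ler_wpM2l.
      by apply: exprn_ge0; exact: (fa_ge0 _ _ a_cvg).
    exact: Nle.
  exact: (neumann _ _ _ _ hT c0 (fa_ge0 _ _ a_cvg tge0 tr) hk ft hl).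
rewrite /spec_radius -/T.
have [ne|e] := pselect ([set cmod l | l in spectrum T] !=set0).
  by apply: ge_sup => // _ [l hl <-]; exact: bnd.
have -> : [set cmod l | l in spectrum T] = set0.
  by apply/seteqP; split => // y hy; exfalso; apply: e; exists y.
by rewrite sup0.
Unshelve. all: by end_near.
Qed.
End Key.
Lemma iter_comm {T : Type} (f g : T -> T) j y : (forall x, f (g x) = g (f x)) ->
  g (iter j f y) = iter j f (g y).
Proof. by move=> h; elim: j => [|j IH] //=; rewrite -IH h. Qed.

Lemma iter_compAB {T : Type} (A B : T -> T) j x : (forall x, A (B x) = B (A x)) ->
  iter j (A \o B) x = iter j A (iter j B x).
Proof.
move=> h; elim: j => [|j IH] //=; rewrite IH; congr (A _).
by rewrite (iter_comm _ _ _ _ h).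
Qed.

Section Bound2.
Context {R : realType} {H : completeNormedModType (C R)} (a : nat -> C R) (rho : R)
  (a_cvg : forall z : C R, cmod z < rho -> cvgn (series (fun n => a n * z ^+ n))).

Lemma r_bound2 (A B : H -> H) : bounded_op A -> bounded_op B ->
  (forall x, A (B x) = B (A x)) ->
  opnorm A * Num.sqrt (opnorm (B \o B)) < rho ->
  spec_radius (op_series a (A \o B)) <= abs_series a (opnorm A * Num.sqrt (opnorm (B \o B))).
Proof.
move=> hA hB hAB sr.
have oa0 := opnorm_ge0 hA; have ob0 := opnorm_ge0 hB.
have hBB := bop_comp hB hB; have ob20 := opnorm_ge0 hBB.
apply: (key _ _ a_cvg _ _ (bop_comp hA hB)) => //; first by apply: mulr_ge0 => //; exact: sqrtr_ge0.
move=> t st tr.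
have Ait j z : rnorm (iter j A z) <= opnorm A ^+ j * rnorm z.
  by apply: iter_opnorm => // y; exact: opnormP.
have [oaz|oap] := eqVneq (opnorm A) 0.
  exists 1; split => // j x; rewrite iter_compAB //.
  case: j => [|j]; first by rewrite /= expr0 !mul1r.
  apply: le_trans (Ait _ _) _; rewrite oaz expr0n /= mul0r.
  by rewrite mul1r mulr_ge0 ?rnorm_ge0 // exprn_ge0 // (le_trans _ (ltW st)) // mulr_ge0 // sqrtr_ge0.
have oapos : 0 < opnorm A by rewrite lt_def oap oa0.
set u := t / opnorm A.
have su : Num.sqrt (opnorm (B \o B)) < u by rewrite /u ltr_pdivlMr // mulrC.
have u0 : 0 < u by apply: le_lt_trans su; exact: sqrtr_ge0.
have b2u : opnorm (B \o B) <= u ^+ 2.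
  by rewrite -(sqr_sqrtr ob20) lerXn2r ?nnegrE ?sqrtr_ge0 ?(ltW u0) // ltW.
set cB := 1 + opnorm B / u.
have cB1 : 1 <= cB by rewrite lerDl divr_ge0 // ltW.
have Bit : forall j y, rnorm (iter j B y) <= cB * u ^+ j * rnorm y /\
                       rnorm (iter j.+1 B y) <= cB * u ^+ j.+1 * rnorm y.
  elim=> [|j IH] y.
    split; first by rewrite expr0 mulr1 ler_peMl // rnorm_ge0.
    rewrite /= expr1; apply: le_trans (opnormP _ hB) _; apply: ler_wpM2r; first exact: rnorm_ge0.
    by rewrite /cB mulrDl mul1r divfK ?gt_eqF // lerDr ltW.
  split; first exact: (IH y).2.
  have -> : iter j.+2 B y = iter j B ((B \o B) y) by rewrite !iterSr.
  apply: le_trans ((IH _).1) _.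
  apply: le_trans (ler_wpM2l _ (opnormP _ hBB)) _.
    by apply: mulr_ge0; [exact: le_trans cB1 | exact: exprn_ge0 (ltW u0)].
  have h2 : opnorm (B \o B) * rnorm y <= u ^+ 2 * rnorm y.
    by apply: ler_wpM2r; [exact: rnorm_ge0| exact: b2u].
  apply: le_trans (ler_wpM2l _ h2) _.
    by apply: mulr_ge0; [exact: le_trans cB1 | exact: exprn_ge0 (ltW u0)].
  by rewrite le_eqVlt; apply/orP; left; apply/eqP; rewrite !exprS expr0; ring.
exists cB; split; first exact: le_trans cB1.
move=> j x; rewrite iter_compAB //.
apply: le_trans (Ait _ _) _.
apply: le_trans (ler_wpM2l (exprn_ge0 _ oa0) ((Bit j x).1)) _.
rewrite le_eqVlt; apply/orP; left; apply/eqP.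
rewrite /u ?expr_div_n ?exprVn.
by field; exact: expf_neq0.
Qed.
End Bound2.
Theorem proposition3p1 (R : realType) (H : completeNormedModType (C R))
  (ip : H -> H -> C R) (hip : is_inner_product ip)
  (a : nat -> C R) (rho : R) (rho_gt0 : 0 < rho)
  (a_cvg : forall z : C R, cmod z < rho ->
     cvgn (series (fun n => a n * z ^+ n)))
  (A B : H -> H) (hA : bounded_op A) (hB : bounded_op B)
  (hAB : forall x, A (B x) = B (A x))
  (nA : opnorm A ^+ 2 < rho) (nB : opnorm B ^+ 2 < rho) :
  let r := spec_radius (op_series a (A \o B)) in
  let fa := abs_series a in
  let nAB := opnorm (A \o B) in
  [/\ r <= 2^-1 * fa nAB
           + 2^-1 * fa (Num.sqrt (opnorm A) * Num.sqrt (opnorm B) * Num.sqrt nAB),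
      2^-1 * fa nAB
           + 2^-1 * fa (Num.sqrt (opnorm A) * Num.sqrt (opnorm B) * Num.sqrt nAB)
        <= 2^-1 * fa nAB
           + 2^-1 * (Num.sqrt (fa (opnorm A * opnorm B)) * Num.sqrt (fa nAB)),
      r <= 2^-1 * fa nAB
           + 2^-1 * Num.min (fa (opnorm A * Num.sqrt (opnorm (B \o B))))
                            (fa (Num.sqrt (opnorm (A \o A)) * opnorm B)) &
      2^-1 * fa nAB
           + 2^-1 * Num.min (fa (opnorm A * Num.sqrt (opnorm (B \o B))))
                            (fa (Num.sqrt (opnorm (A \o A)) * opnorm B))
        <= 2^-1 * fa nAB
           + 2^-1 * Num.min
                (Num.sqrt (fa (opnorm A ^+ 2)) * Num.sqrt (fa (opnorm (B \o B))))
                (Num.sqrt (fa (opnorm (A \o A))) * Num.sqrt (fa (opnorm B ^+ 2)))].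
Proof.
move=> r fa nAB.
have hABo := bop_comp hA hB; have hAA := bop_comp hA hA; have hBB := bop_comp hB hB.
set oa := opnorm A; set ob := opnorm B; set oa2 := opnorm (A \o A); set ob2 := opnorm (B \o B).
have oa0 : 0 <= oa := opnorm_ge0 hA.
have ob0 : 0 <= ob := opnorm_ge0 hB.
have oa20 : 0 <= oa2 := opnorm_ge0 hAA.
have ob20 : 0 <= ob2 := opnorm_ge0 hBB.
have n0 : 0 <= nAB := opnorm_ge0 hABo.
have comp_le (S T : H -> H) : bounded_op S -> bounded_op T ->
    opnorm (S \o T) <= opnorm S * opnorm T.
  move=> hS hT; apply: opnorm_le (bop_comp hS hT) _ _.
    by apply: mulr_ge0; exact: opnorm_ge0.
  move=> x /=; apply: le_trans (opnormP _ hS) _; rewrite -mulrA.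
  by apply: ler_wpM2l; [exact: opnorm_ge0 | exact: opnormP].
have nle : nAB <= oa * ob by exact: comp_le.
have a2le : oa2 <= oa ^+ 2 by rewrite expr2; exact: comp_le.
have b2le : ob2 <= ob ^+ 2 by rewrite expr2; exact: comp_le.
have abr : oa * ob < rho.
  have h := sqr_ge0 (oa - ob); rewrite sqrrB in h.
  move: nA nB h; rewrite !expr2 => ? ? ?; nra.
have nr : nAB < rho by exact: le_lt_trans abr.
have sb2 : Num.sqrt ob2 <= ob.
  by rewrite -(ger0_norm ob0) -sqrtr_sqr ler_sqrt // sqr_ge0.
have sa2 : Num.sqrt oa2 <= oa.
  by rewrite -(ger0_norm oa0) -sqrtr_sqr ler_sqrt // sqr_ge0.
have sb20 := sqrtr_ge0 ob2; have sa20 := sqrtr_ge0 oa2.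
have Yr : oa * Num.sqrt ob2 < rho by apply: le_lt_trans abr; exact: ler_wpM2l.
have Zr : Num.sqrt oa2 * ob < rho by apply: le_lt_trans abr; exact: ler_wpM2r.
have r1 : r <= fa nAB.
  apply: (key _ _ a_cvg _ _ hABo) => // t st tr.
  exists 1; split => // j x; rewrite mul1r.
  apply: le_trans (iter_opnorm _ _ _ hABo n0 (fun y => opnormP y hABo)) _.
  apply: ler_wpM2r; first exact: rnorm_ge0.
  rewrite lerXn2r ?nnegrE // ?ltW //; exact: le_lt_trans st.
have r2 : r <= fa (oa * Num.sqrt ob2) by exact: (r_bound2 _ _ a_cvg _ _ hA hB hAB).
have r3 : r <= fa (Num.sqrt oa2 * ob).
  have e : A \o B = B \o A by apply: funext => x /=; rewrite hAB.
  rewrite /r e mulrC; apply: (r_bound2 _ _ a_cvg _ _ hB hA) => //; last by rewrite mulrC.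
have famin : forall u v, 0 <= u -> u <= v -> v < rho -> fa u <= fa v.
  by move=> u v u0 uv vr; exact: (fa_mono _ _ a_cvg).
set X := Num.sqrt oa * Num.sqrt ob * Num.sqrt nAB.
have X0 : 0 <= X by rewrite /X !mulr_ge0 ?sqrtr_ge0.
have Xe : X = Num.sqrt (oa * ob * nAB) by rewrite /X !sqrtrM // mulr_ge0.
have nX : nAB <= X.
  have -> : nAB = Num.sqrt (nAB * nAB) by rewrite -expr2 sqrtr_sqr ger0_norm.
  rewrite Xe ler_sqrt; last by rewrite !mulr_ge0 // sqrtr_ge0.
  rewrite ler_wpM2r // ?sqrtr_ge0 //.
have Xr : X < rho.
  apply: le_lt_trans abr.
  have -> : oa * ob = Num.sqrt ((oa * ob) * (oa * ob)) by rewrite -expr2 sqrtr_sqr ger0_norm // mulr_ge0.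
  rewrite Xe ler_sqrt; last by rewrite !mulr_ge0.
  by rewrite ler_wpM2l // mulr_ge0.
split.
- have := famin _ _ n0 nX Xr; rewrite -/fa => h; lra.
- rewrite lerD2l; apply: ler_wpM2l; first by rewrite invr_ge0.
  have := @fa_cs _ _ _ a_cvg (Num.sqrt oa * Num.sqrt ob) (Num.sqrt nAB).
  rewrite exprMn !sqr_sqrtr //; apply; rewrite ?mulr_ge0 ?sqrtr_ge0 //.
- have : r <= Num.min (fa (oa * Num.sqrt ob2)) (fa (Num.sqrt oa2 * ob)).
    by rewrite le_min r2 r3.
  move=> h; lra.
- rewrite lerD2l; apply: ler_wpM2l; first by rewrite invr_ge0.
  have h1 := @fa_cs _ _ _ a_cvg oa (Num.sqrt ob2) oa0 sb20 nA.
  rewrite sqr_sqrtr // in h1; have {}h1 := h1 (le_lt_trans b2le nB).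
  have h2 := @fa_cs _ _ _ a_cvg (Num.sqrt oa2) ob sa20 ob0.
  rewrite sqr_sqrtr // in h2; have {}h2 := h2 (le_lt_trans a2le nA) nB.
  rewrite le_min !ge_min h1 h2 orbT.
  by [].
Qed.
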